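(* Let $X$ be a locally convex space, let $T:X\rightrightarrows X^{*}$, and let $V\subset X$ with $V\cap D(T)\neq\emptyset$. Consider: (i) $T|_{V}\in\mathcal{M}(X)$ and $V$ identifies $T$; (ii) $T$ is $V$-representable and $V$ locates $T$; (iii) $T$ is $V$-representable and $V$-NI. Then (i) $\Rightarrow$ (ii) $\Rightarrow$ (iii). If, in addition, $V$ is algebraically open, then (i), (ii), (iii) are equivalent.
   Context: $(X,\tau)$ is a non-trivial Hausdorff locally convex space, $X^*$ its dual with weak-star topology $\omega^*$, $Z=X\times X^*$ with topology $\tau\times\omega^*$, $c(x,x^* )=\langle x,x^*\rangle$. Operators are identified with their graphs; $D(T)$ is the domain; $T|_V$ has graph $\operatorname{Graph}T\cap(V\times X^* )$. $\varphi_{T}(x,x^{*})=\sup\{\langle x,u^{*}\rangle+\langle u,x^{*}\rangle-\langle u,u^{*}\rangle\mid(u,u^{*})\in T\}$ ($\sup\emptyset=-\infty$); $[f\le g]=\{z\mid f(z)\le g(z)\}$. $\mathcal M(X)$: monotone operators with non-empty graph. $\mathscr R$: proper convex $\tau\times\omega^*$-lsc $h:Z\to\overline{\mathbb R}$ with $h\ge c$. $T$ is $V$-representable if $V\cap D(T)\ne\emptyset$ and there is $h\in\mathscr R$ with $[h=c]\cap(V\times X^* )=\operatorname{Graph}(T|_V)$. $V$ identifies $T$ if $[\varphi_{T|_V}\le c]\cap(V\times X^* )\subset\operatorname{Graph}T$; $V$ locates $T$ if $\operatorname{Pr}_X([\varphi_{T|_V}\le c])\cap V\subset D(T)$; $T$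 is $V$-NI if $\varphi_{T|_V}\ge c$ on $V\times X^*$. $V$ is algebraically open if $V$ equals its algebraic interior (core). *)

(* Defs.v *)
From HB Require Import structures.
From mathcomp Require Import all_boot all_order all_algebra.
From mathcomp Require Import all_classical all_reals all_analysis.
Set Implicit Arguments. Unset Strict Implicit. Unset Printing Implicit Defensive.
Import Order.TTheory GRing.Theory Num.Theory.
Local Open Scope classical_set_scope.
Local Open Scope ring_scope.

Section Dual.
Context {R : realType} {E : tvsType R}.

Record dual := Dual {
  dfun :> E -> R ;
  dfun_linear : forall (a : R) (x y : E), dfun (a *: x + y) = a * dfun x + dfun y ;
  dfun_cont : continuous (dfun : E -> R^o) }.

Definition cpl (z : E * dual) : R := z.2 z.1.

(** Closed sets of Z for the product topology tau × w^* (w^* = weak-star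
    topology, whose basic neighbourhoods of x^* are
    {u^* | forall a in s, |u^*(a) - x^*(a)| < eps}, s finite, eps > 0). *)
Definition tw_closed (S : set (E * dual)) : Prop :=
  forall z : E * dual, ~ S z ->
    exists U : set E, nbhs z.1 U /\
    exists (s : seq E) (eps : R), 0 < eps /\
      forall (x : E) (u : dual), U x ->
        (forall a, a \in s -> `|u a - z.2 a| < eps) -> ~ S (x, u).

Definition tw_lsc (h : E * dual -> \bar R) : Prop :=
  forall r : R, tw_closed [set z | (h z <= r%:E)%E].

Definition proper_fun (h : E * dual -> \bar R) : Prop :=
  (forall z, h z != -oo%E) /\ exists z, h z != +oo%E.

(** convexity of h (the convex combination in X^* is given pointwise). *)
Definition convex_fun (h : E * dual -> \bar R) : Prop :=
  forall (x1 x2 : E) (u1 u2 w : dual) (t : R), 0 < t < 1 ->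
    (forall a, w a = t * u1 a + (1 - t) * u2 a) ->
    (h ((t *: x1 + (1 - t) *: x2)%R, w) <= t%:E * h (x1, u1) + (1 - t)%:E * h (x2, u2))%E.

Definition repr_class (h : E * dual -> \bar R) : Prop :=
  [/\ proper_fun h, convex_fun h, tw_lsc h & forall z, ((cpl z)%:E <= h z)%E].

(** Operators T : X ⇉ X^* are identified with their graphs. *)
Definition dom (T : set (E * dual)) : set E := [set x | exists u, T (x, u)].
Definition prX (S : set (E * dual)) : set E := [set x | exists u, S (x, u)].
Definition restr (T : set (E * dual)) (V : set E) : set (E * dual) :=
  [set z | T z /\ V z.1].

(** Fitzpatrick function (sup of the empty set is -oo). *)
Definition fitz (T : set (E * dual)) (z : E * dual) : \bar R :=
  ereal_sup [set ((p.2 z.1 + z.2 p.1 - p.2 p.1)%:E)%E | p in T].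

Definition monotone_op (T : set (E * dual)) : Prop :=
  forall p q, T p -> T q -> 0 <= (p.2 (p.1 - q.1) - q.2 (p.1 - q.1)).

Definition in_M (T : set (E * dual)) : Prop := monotone_op T /\ T !=set0.

Definition V_representable (T : set (E * dual)) (V : set E) : Prop :=
  (V `&` dom T !=set0) /\
  exists h, repr_class h /\
    forall z : E * dual, (h z = (cpl z)%:E /\ V z.1) <-> restr T V z.

Definition V_identifies (V : set E) (T : set (E * dual)) : Prop :=
  forall z : E * dual, (fitz (restr T V) z <= (cpl z)%:E)%E -> V z.1 -> T z.

Definition V_locates (V : set E) (T : set (E * dual)) : Prop :=
  forall x, prX [set z | (fitz (restr T V) z <= (cpl z)%:E)%E] x -> V x -> dom T x.

Definition V_NI (T : set (E * dual)) (V : set E) : Prop :=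
  forall z : E * dual, V z.1 -> ((cpl z)%:E <= fitz (restr T V) z)%E.

Definition alg_open (V : set E) : Prop :=
  forall x, V x -> forall d : E, exists2 delta : R, 0 < delta &
    forall t : R, 0 <= t <= delta -> V (x + t *: d).

End Dual.
Arguments dual R E : clear implicits.

(* Main.v *)
Require Import Defs.
From HB Require Import structures.
From mathcomp Require Import all_boot all_order all_algebra.
From mathcomp Require Import all_classical all_reals all_analysis.
From mathcomp Require Import ring lra.
Import Order.TTheory GRing.Theory Num.Theory.
Local Open Scope classical_set_scope.
Local Open Scope ring_scope.

Section HahnBanach.
Variables (R : realType) (V : lmodType R) (p : V -> R).
Hypothesis p_ge0 : forall x, 0 <= p x.
Hypothesis p_sub : forall x y, p (x + y) <= p x + p y.
Hypothesis p_hom : forall (a : R) x, 0 < a -> p (a *: x) = a * p x.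
Variable y0 : V.
Hypothesis y0_ge : 1 <= p y0.

Definition hgood (G : set (V * R)) :=
  [/\ forall v r r', G (v, r) -> G (v, r') -> r = r',
      forall a v r w s, G (v, r) -> G (w, s) -> G (a *: v + w, a * r + s),
      forall v r, G (v, r) -> r <= p v &
      (G = set0 \/ G (y0, 1))].

Lemma hgood_chain (F : set (set (V * R))) : F `<=` hgood -> total_on F subset ->
  hgood (\bigcup_(X in F) X).
Proof.
move=> FG Ftot; split.
- move=> v r r' [X FX Xv] [Y FY Yv].
  have [XY|YX] := Ftot _ _ FX FY.
  + by have [f _ _ _] := FG _ FY; apply: f (XY _ Xv) Yv.
  + by have [f _ _ _] := FG _ FX; apply: f Xv (YX _ Yv).
- move=> a v r w s [X FX Xv] [Y FY Yw].
  have [XY|YX] := Ftot _ _ FX FY.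
  + have [_ l _ _] := FG _ FY; exists Y => //; exact: l (XY _ Xv) Yw.
  + have [_ l _ _] := FG _ FX; exists X => //; exact: l Xv (YX _ Yw).
- by move=> v r [X FX Xv]; have [_ _ d _] := FG _ FX; exact: d Xv.
- have [[X FX Xy]|nX] := pselect (exists2 X, F X & X (y0, 1)).
    by right; exists X.
  left; apply/seteqP; split => // z [X FX Xz].
  have [_ _ _ [X0|Xy]] := FG _ FX; first by rewrite X0 in Xz.
  by exfalso; apply: nX; exists X.
Qed.

Lemma p0 : p 0 = 0.
Proof.
have := p_hom 2%:R (0 : V) (ltr0Sn R 1); rewrite scaler0 => e.
lra.
Qed.

Lemma y0n0 : y0 != 0.
Proof. by apply/eqP => y00; move: y0_ge; rewrite y00 p0 ler10. Qed.

Lemma hb_graph : exists A, hgood A /\ (forall v, exists r, A (v, r)) /\ A (y0, 1).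
Proof.
have [A [gA Amax]] := Zorn_bigcup hgood_chain.
have [Af Al Ad Ay] := gA.
have Ay0 : A (y0, 1).
  case: Ay => // A0; exfalso.
  pose G0 := [set z : V * R | exists a, z = (a *: y0, a)].
  apply: (Amax G0).
    rewrite A0; split; first by [].
    by move=> /(_ (0 *: y0, 0) (ex_intro _ 0 erefl)).
  split.
  - move=> v r r' [a [-> ->]] [b [Hab ->]].
    apply/eqP; rewrite -subr_eq0; apply/eqP.
    have : (a - b) *: y0 == 0 by rewrite scalerBl Hab subrr.
    by rewrite scaler_eq0 (negbTE y0n0) orbF => /eqP.
  - move=> c v r w s [a [-> ->]] [b [-> ->]].
    by exists (c * a + b); rewrite scalerDl scalerA.
  - move=> v r [a [-> ->]].
    have [a0|a0] := ltP 0 a.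
      by rewrite p_hom // -[X in X <= _]mulr1 ler_wpM2l // ltW.
    exact: le_trans a0 (p_ge0 _).
  - by right; exists 1; rewrite scale1r.
have A00 : A (0, 0).
  by have := Al (-1) _ _ _ _ Ay0 Ay0; rewrite scaleN1r addNr mulN1r addNr.
have Adom : forall a v r w s, A (v, r) -> A (w, s) -> A (a *: v - w, a * r - s).
  move=> a v r w s Av Aw.
  have := Al (-1) _ _ _ _ Aw A00; rewrite scaleN1r mulN1r !addr0 => Aw'.
  exact: Al.
exists A; split => //; split => //.
move=> v; apply: contrapT => nv.
have nv' : forall r, ~ A (v, r) by move=> r Avr; apply: nv; exists r.
pose L := [set x | exists w r, A (w, r) /\ x = r - p (w - v)].
have key : forall w1 r1 w2 r2, A (w1, r1) -> A (w2, r2) ->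
    r1 - p (w1 - v) <= p (w2 + v) - r2.
  move=> w1 r1 w2 r2 A1 A2.
  have := Ad _ _ (Al 1 _ _ _ _ A1 A2); rewrite scale1r mul1r => le1.
  have := p_sub (w1 - v) (w2 + v).
  have -> : w1 - v + (w2 + v) = w1 + w2 by rewrite addrCA subrK addrC.
  move=> le2; lra.
have Lne : L !=set0 by exists (1 - p (y0 - v)), y0, 1.
have Lub : has_ubound L.
  exists (p (y0 + v) - 1) => x [w [r [Awr ->]]]; exact: key.
pose c := sup L.
have cge : forall w r, A (w, r) -> r - p (w - v) <= c.
  by move=> w r Awr; apply: ub_le_sup => //; exists w, r.
have cle : forall w r, A (w, r) -> c <= p (w + v) - r.
  move=> w r Awr; apply: ge_sup => // x [w' [r' [Awr' ->]]]; exact: key.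
pose A' := [set z : V * R | exists w r a, A (w, r) /\ z = (w + a *: v, r + a * c)].
apply: (Amax A').
  split.
    by move=> [w r] Awr; exists w, r, 0; rewrite scale0r mul0r !addr0.
  move=> /(_ (v, c)) AA; apply: (nv' c); apply: AA.
  by exists 0, 0, 1; rewrite scale1r mul1r !add0r.
split.
- move=> x r r' [w [s [a [Aws [-> ->]]]]] [w' [s' [a' [Aws' [Ha ->]]]]].
  have aa : a = a'.
    apply/eqP; apply: contraT => aa.
    have aa0 : a - a' != 0 by rewrite subr_eq0.
    have := Adom ((a - a')^-1) _ _ _ _ (Adom 1 _ _ _ _ Aws' Aws) A00.
    rewrite scale1r subr0 mul1r subr0.
    have -> : (a - a')^-1 *: (w' - w) = v.
      apply: (scalerI aa0); rewrite scalerA divff // scale1r scalerBl.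
      have -> : w' = w + a *: v - a' *: v by rewrite Ha addrK.
      by rewrite [w + _]addrC addrAC addrK.
    by move=> /nv'.
  subst a'; have ww : w = w' by move/addIr: Ha.
  by subst w'; rewrite (Af _ _ _ Aws Aws').
- move=> b x r y s [w [r1 [a [A1 [-> ->]]]]] [w' [r2 [a' [A2 [-> ->]]]]].
  exists (b *: w + w'), (b * r1 + r2), (b * a + a'); split; first exact: Al.
  congr (_, _).
    by rewrite scalerDr scalerA scalerDl addrACA.
  ring.
- move=> x r [w [s [a [Aws [-> ->]]]]].
  have [a0|a0|->] := ltgtP a 0; last by rewrite scale0r mul0r !addr0; exact: Ad.
  + have b0 : 0 < - a by rewrite oppr_gt0.
    have Ab : A ((- a)^-1 *: w, (- a)^-1 * s).
      by have := Al ((- a)^-1) _ _ _ _ Aws A00; rewrite !addr0.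
    have := cge _ _ Ab.
    have -> : (- a)^-1 *: w - v = (- a)^-1 *: (w + a *: v).
      by rewrite scalerDr scalerA invrN mulNr mulVf ?lt_eqF // scaleN1r.
    rewrite p_hom ?invr_gt0 // => h.
    have := ler_wpM2l (ltW b0) h; rewrite mulrBr !mulrA mulfV ?gt_eqF // !mul1r.
    lra.
  + have Ab : A (a^-1 *: w, a^-1 * s).
      by have := Al (a^-1) _ _ _ _ Aws A00; rewrite !addr0.
    have := cle _ _ Ab.
    have -> : a^-1 *: w + v = a^-1 *: (w + a *: v).
      by rewrite scalerDr scalerA mulVf ?gt_eqF // scale1r.
    rewrite p_hom ?invr_gt0 // => h.
    have := ler_wpM2l (ltW a0) h; rewrite mulrBr !mulrA mulfV ?gt_eqF // !mul1r.
    lra.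
- by right; exists y0, 1, 0; rewrite scale0r mul0r !addr0.
Qed.

Theorem hahn_banach : exists F : V -> R,
  [/\ forall a x y, F (a *: x + y) = a * F x + F y,
      forall x, F x <= p x & F y0 = 1].
Proof.
have [A [[Af Al Ad _] [Atot Ay0]]] := hb_graph.
pose F v := projT1 (cid (Atot v)).
have FA v : A (v, F v) by rewrite /F; case: cid.
exists F; split.
- move=> a x y; apply: (Af (a *: x + y)); first exact: FA.
  exact: Al (FA x) (FA y).
- by move=> x; exact: Ad (FA x).
- exact: Af (FA y0) Ay0.
Qed.

End HahnBanach.
Section Gauge.
Variables (R : realType) (V : lmodType R) (C : set V).
Hypothesis C0 : C 0.
Hypothesis Cconv : forall x y (t : R), C x -> C y -> 0 <= t <= 1 ->
  C (t *: x + (1 - t) *: y).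
Hypothesis Cabs : forall v, exists2 t, 0 < t & C (t *: v).

Definition gset v := [set t : R | 0 < t /\ C (t^-1 *: v)].
Definition gauge v := inf (gset v).

Lemma gset_ne v : gset v !=set0.
Proof.
have [t t0 Ct] := Cabs v; exists t^-1; split; first by rewrite invr_gt0.
by rewrite invrK.
Qed.

Lemma gset_lb v : has_lbound (gset v).
Proof. by exists 0 => t [t0 _]; exact: ltW. Qed.

Lemma gset_inf v : has_inf (gset v).
Proof. by split; [exact: gset_ne | exact: gset_lb]. Qed.

Lemma gauge_ge0 v : 0 <= gauge v.
Proof. by apply: lb_le_inf; [exact: gset_ne | move=> t [t0 _]; exact: ltW]. Qed.

Lemma gauge_le1 v : C v -> gauge v <= 1.
Proof.
move=> Cv; apply: ge_inf; first exact: gset_lb.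
by split; [exact: ltr01 | rewrite invr1 scale1r].
Qed.

Lemma gauge_lt1 v : gauge v < 1 -> C v.
Proof.
move=> /(inf_lt (gset_ne v)) [t [t0 Ct] t1].
have := Cconv (t^-1 *: v) 0 t Ct C0.
rewrite scaler0 addr0 scalerA mulfV ?gt_eqF // scale1r; apply.
by rewrite (ltW t0) (ltW t1).
Qed.

Lemma gauge_hom_le a v : 0 < a -> gauge (a *: v) <= a * gauge v.
Proof.
move=> a0; apply/ler_addgt0Pr => e e0.
have ea : 0 < e / a by rewrite divr_gt0.
have [s [s0 Cs] slt] := inf_adherent ea (gset_inf v).
have H : gset (a *: v) (a * s).
  split; first by rewrite mulr_gt0.
  by rewrite scalerA invfM mulrAC mulVf ?gt_eqF // mul1r.
apply: le_trans (ge_inf (gset_lb _) H) _.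
have := ler_wpM2l (ltW a0) (ltW slt).
by rewrite mulrDr mulrCA mulfV ?gt_eqF // mulr1.
Qed.

Lemma gauge_hom a v : 0 < a -> gauge (a *: v) = a * gauge v.
Proof.
move=> a0; apply/le_anti; rewrite gauge_hom_le //=.
have ai : 0 < a^-1 by rewrite invr_gt0.
have := @gauge_hom_le a^-1 (a *: v) ai.
rewrite scalerA mulVf ?gt_eqF // scale1r => h.
have := ler_wpM2l (ltW a0) h.
by rewrite mulrA mulfV ?gt_eqF // mul1r.
Qed.

Lemma gauge_sub x y : gauge (x + y) <= gauge x + gauge y.
Proof.
apply/ler_addgt0Pr => e e0.
have e2 : 0 < e / 2 by rewrite divr_gt0.
have [s [s0 Cs] slt] := inf_adherent e2 (gset_inf x).
have [t [t0 Ct] tlt] := inf_adherent e2 (gset_inf y).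
have st0 : 0 < s + t by rewrite addr_gt0.
have H : gset (x + y) (s + t).
  split => //.
  have -> : (s + t)^-1 *: (x + y) =
      (s / (s + t)) *: (s^-1 *: x) + (1 - s / (s + t)) *: (t^-1 *: y).
    rewrite !scalerA scalerDr; congr (_ *: _ + _ *: _); field.
    - by rewrite !gt_eqF.
    - by rewrite !gt_eqF.
  apply: Cconv => //.
  apply/andP; split; first by rewrite divr_ge0 // ltW.
  by rewrite ler_pdivrMr // mul1r lerDl ltW.
apply: le_trans (ge_inf (gset_lb _) H) _.
lra.
Qed.

Lemma gauge_all : [/\ (forall v, 0 <= gauge v),
  (forall x y, gauge (x + y) <= gauge x + gauge y),
  (forall a v, 0 < a -> gauge (a *: v) = a * gauge v),
  (forall v, C v -> gauge v <= 1) & (forall v, gauge v < 1 -> C v)].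
Proof.
split; [exact: gauge_ge0|exact: gauge_sub|exact: gauge_hom|exact: gauge_le1|].
exact: gauge_lt1.
Qed.

End Gauge.
Section DualBasics.
Context {R : realType} {E : tvsType R}.
Implicit Types (u v : dual R E) (x y : E).

Lemma dual_eq u v : (forall x, u x = v x) -> u = v.
Proof.
case: u => fu lu cu; case: v => fv lv cv /= h.
have e : fu = fv by apply: funext.
subst fv; have -> : lu = lv by exact: Prop_irrelevance.
by have -> : cu = cv by exact: Prop_irrelevance.
Qed.

Lemma dualD u x y : u (x + y) = u x + u y.
Proof. by have := dfun_linear u 1 x y; rewrite scale1r mul1r. Qed.

Lemma dual0 u : u 0 = 0.
Proof.
have := dualD u 0 0; rewrite addr0 => h; lra.
Qed.

Lemma dualZ u a x : u (a *: x) = a * u x.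
Proof. by have := dfun_linear u a x 0; rewrite !addr0 dual0 addr0. Qed.

Lemma dualN u x : u (- x) = - u x.
Proof. by rewrite -scaleN1r dualZ mulN1r. Qed.

Lemma dualB u x y : u (x - y) = u x - u y.
Proof. by rewrite dualD dualN. Qed.

Lemma dlin_linear (a b : R) u v : forall (c : R) (x y : E),
  a * u (c *: x + y) + b * v (c *: x + y) =
  c * (a * u x + b * v x) + (a * u y + b * v y).
Proof. by move=> c x y; rewrite !dualD !dualZ; ring. Qed.

Lemma dlin_cont (a b : R) u v :
  continuous ((fun x => a * u x + b * v x) : E -> R^o).
Proof.
move=> x.
apply: (@continuousD R R^o E (fun x => a * u x) (fun x => b * v x)).
  apply: (@continuousM R E (fun=> a) (fun x => u x)).
    exact: (@cst_continuous E R^o a x).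
  exact: dfun_cont.
apply: (@continuousM R E (fun=> b) (fun x => v x)).
  exact: (@cst_continuous E R^o b x).
exact: dfun_cont.
Qed.

Definition dlin (a b : R) u v : dual R E :=
  Dual (dlin_linear a b u v) (dlin_cont a b u v).

Lemma dlinE a b u v x : dlin a b u v x = a * u x + b * v x.
Proof. by []. Qed.

End DualBasics.

Section DualZero.
Context {R : realType} {E : tvsType R}.
Lemma dzero_linear : forall (c : R) (x y : E), (0 : R) = c * 0 + 0.
Proof. by move=> *; rewrite mulr0 addr0. Qed.
Lemma dzero_cont : continuous ((fun _ => 0) : E -> R^o).
Proof. by move=> x; exact: cst_continuous. Qed.
Definition dzero : dual R E := Dual dzero_linear dzero_cont.
End DualZero.

Definition dadd {R : realType} {E : tvsType R} (u v : dual R E) := dlin 1 1 u v.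
Definition dopp {R : realType} {E : tvsType R} (u : dual R E) := dlin (-1) 0 u u.
Definition dscale {R : realType} {E : tvsType R} (a : R) (u : dual R E) := dlin a 0 u u.

HB.instance Definition _ (R : realType) (E : tvsType R) := gen_eqMixin (dual R E).
HB.instance Definition _ (R : realType) (E : tvsType R) := gen_choiceMixin (dual R E).

Section DualZmod.
Context {R : realType} {E : tvsType R}.
Let D := dual R E.
Lemma daddA : associative (@dadd R E).
Proof. by move=> u v w; apply: dual_eq => x; rewrite !dlinE; ring. Qed.
Lemma daddC : commutative (@dadd R E).
Proof. by move=> u v; apply: dual_eq => x; rewrite !dlinE; ring. Qed.
Lemma dadd0 : left_id (@dzero R E) (@dadd R E).
Proof. by move=> u; apply: dual_eq => x; rewrite !dlinE /=; ring. Qed.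
Lemma daddN : left_inverse (@dzero R E) (@dopp R E) (@dadd R E).
Proof. by move=> u; apply: dual_eq => x; rewrite !dlinE /=; ring. Qed.
End DualZmod.

HB.instance Definition _ (R : realType) (E : tvsType R) :=
  GRing.isZmodule.Build (dual R E) (@daddA R E) (@daddC R E) (@dadd0 R E) (@daddN R E).

Section DualLmod.
Context {R : realType} {E : tvsType R}.
Lemma dscaleA (a b : R) (v : dual R E) : dscale a (dscale b v) = dscale (a * b) v.
Proof. by apply: dual_eq => x; rewrite !dlinE; ring. Qed.
Lemma dscale1 : left_id 1 (@dscale R E).
Proof. by move=> u; apply: dual_eq => x; rewrite !dlinE; ring. Qed.
Lemma dscaleDr : right_distributive (@dscale R E) (@dadd R E).
Proof. by move=> a u v; apply: dual_eq => x; rewrite !dlinE; ring. Qed.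
Lemma dscaleDl (v : dual R E) : {morph (@dscale R E)^~ v : a b / a + b >-> dadd a b}.
Proof. by move=> a b; apply: dual_eq => x; rewrite !dlinE; ring. Qed.
End DualLmod.

HB.instance Definition _ (R : realType) (E : tvsType R) :=
  GRing.Zmodule_isLmodule.Build R (dual R E) (@dscaleA R E) (@dscale1 R E)
    (@dscaleDr R E) (@dscaleDl R E).

Section DualEval.
Context {R : realType} {E : tvsType R}.
Implicit Types (u v : dual R E) (x y : E).
Lemma devD u v x : (u + v) x = u x + v x.
Proof. by change (1 * u x + 1 * v x = u x + v x); rewrite !mul1r. Qed.
Lemma devZ (a : R) u x : (a *: u) x = a * u x.
Proof. by change (a * u x + 0 * u x = a * u x); rewrite mul0r addr0. Qed.
Lemma dev0 x : (0 : dual R E) x = 0.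
Proof. by []. Qed.
Lemma devN u x : (- u) x = - u x.
Proof. by change (-1 * u x + 0 * u x = - u x); rewrite mul0r addr0 mulN1r. Qed.
Lemma devB u v x : (u - v) x = u x - v x.
Proof. by rewrite devD devN. Qed.
End DualEval.

Section DualRep.
Context {R : realType} {E : tvsType R}.
Implicit Types (u v : dual R E) (x y : E).

Lemma eval_rep (s : seq E) : forall (G : dual R E -> R),
  (forall (c : R) u v, G (c *: u + v) = c * G u + G v) ->
  (forall u, (forall a, a \in s -> u a = 0) -> G u = 0) ->
  exists d, forall u, G u = u d.
Proof.
elim: s => [|a s IH] G Glin H.
  by exists 0 => u; rewrite dual0 H.
have G0 : G 0 = 0.
  by have := Glin 1 0 0; rewrite scale1r addr0 mul1r => h; lra.
have GZ c u : G (c *: u) = c * G u by rewrite -[c *: u]addr0 Glin G0 addr0.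
have [[u0 [u0s u0a]]|nex] := pselect (exists u0 : dual R E,
    (forall b, b \in s -> u0 b = 0) /\ u0 a != 0).
  pose u1 := (u0 a)^-1 *: u0.
  have u1a : u1 a = 1 by rewrite devZ mulVf.
  have u1s b : b \in s -> u1 b = 0 by move=> bs; rewrite devZ (u0s b bs) mulr0.
  pose G' u := G u - u a * G u1.
  have G'lin c u v : G' (c *: u + v) = c * G' u + G' v.
    by rewrite /G' Glin devD devZ; ring.
  have G'van u : (forall b, b \in s -> u b = 0) -> G' u = 0.
    move=> us; rewrite /G'.
    have : G ((- u a) *: u1 + u) = 0.
      apply: H => b; rewrite in_cons => /orP[/eqP ->|bs].
        by rewrite devD devZ u1a; ring.
      by rewrite devD devZ (u1s b bs) (us b bs); ring.
    by rewrite Glin => h; lra.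
  have [d' Hd'] := IH G' G'lin G'van.
  exists (d' + G u1 *: a) => u.
  rewrite dualD dualZ -Hd' /G'; ring.
apply: IH => // u us; apply: H => b; rewrite in_cons => /orP[/eqP ->|bs]; last exact: us.
apply/eqP; apply: contraT => ua; exfalso; apply: nex; exists u; split => //.
Qed.

Lemma vanish_of_bound (s : seq E) (eps : R) (G : dual R E -> R) : 0 < eps ->
  (forall (c : R) u v, G (c *: u + v) = c * G u + G v) ->
  (forall u, (forall a, a \in s -> `|u a| < eps) -> `|G u| <= 1) ->
  forall u, (forall a, a \in s -> u a = 0) -> G u = 0.
Proof.
move=> eps0 Glin Hb u us.
have G0 : G 0 = 0.
  by have := Glin 1 0 0; rewrite scale1r addr0 mul1r => h; lra.
have GZ c v : G (c *: v) = c * G v by rewrite -[c *: v]addr0 Glin G0 addr0.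
have Hb' c : `|c * G u| <= 1.
  rewrite -GZ; apply: Hb => a as_.
  have -> : (c *: u) a = c * u a by exact: devZ.
  by rewrite (us a as_) mulr0 normr0.
apply/eqP; apply: contraT => Gu.
have := Hb' (2 / `|G u|).
rewrite normrM ger0_norm ?divr_ge0 // divfK ?normr_eq0 // => h; lra.
Qed.

End DualRep.

Section ContBound.
Context {R : realType} {E : tvsType R}.

Lemma cont_of_bound (f : E -> R) (N0 : set E) :
  (forall (c : R) x y, f (c *: x + y) = c * f x + f y) ->
  nbhs (0 : E) N0 -> (forall u, N0 u -> `|f u| <= 1) ->
  continuous (f : E -> R^o).
Proof.
move=> flin N0n Hb x.
have f0 : f 0 = 0.
  by have := flin 1 0 0; rewrite scale1r addr0 mul1r => h; lra.
have fZ c v : f (c *: v) = c * f v by rewrite -[c *: v]addr0 flin f0 addr0.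
have fD v w : f (v + w) = f v + f w by rewrite -[v]scale1r flin mul1r scale1r.
apply/cvgrPdist_lt => e e0.
have e2 : e / 2 != 0 by rewrite gt_eqF // divr_gt0.
have := nbhsT x (nbhs0Z e2 N0n).
apply: filterS => t [y [n Nn <-] <-].
rewrite fD fZ opprD addrA subrr sub0r normrN normrM.
have := Hb n Nn; have : 0 <= e / 2 by rewrite ltW // divr_gt0.
move=> h1 h2; rewrite ger0_norm //.
have := ler_wpM2l h1 h2; rewrite mulr1 => h3; lra.
Qed.

End ContBound.

Section NearHelpers.
Context {R : realType}.

Lemma near0_scale (F : tvsType R) (u : F) (N : set F) :
  nbhs 0 N -> \forall t \near (0 : R^o), N (t *: u).
Proof.
move=> N0.
have h : (fun t : R^o => t *: u) @ (0 : R^o) --> (0 : R^o) *: u.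
  apply: (@continuous2_cvg _ R^o F F _ _ (fun t => t) (fun _ => u) (fun a b => a *: b)).
  - exact: (@scale_continuous R F (0, u)).
  - exact: cvg_id.
  - exact: cvg_cst.
rewrite scale0r in h; exact: h.
Qed.

Lemma near0_mul (c eps : R) : 0 < eps -> \forall t \near (0 : R^o), `|t * c| < eps.
Proof.
move=> e0; have := @near0_scale R^o c [set x : R^o | `|x| < eps].
apply; apply/nbhs_ballP; exists eps => //= x.
by rewrite /ball /= sub0r normrN.
Qed.

Lemma near0_pos (P : set R) : (\forall t \near (0 : R^o), P t) -> exists2 t, 0 < t & P t.
Proof.
move/nbhs_ballP => [d /= d0 Hd]; exists (d / 2); first by rewrite divr_gt0.
apply: Hd; rewrite /ball /= sub0r normrN gtr0_norm ?divr_gt0 //.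
by rewrite ltr_pdivrMr // ltr_pMr // ltr1n.
Qed.

Lemma near_all {T : eqType} (s : seq T) (P : T -> R -> Prop) :
  (forall a, \forall t \near (0 : R^o), P a t) ->
  \forall t \near (0 : R^o), forall a, a \in s -> P a t.
Proof.
move=> H; elim: s => [|a s IH].
  apply: (@filterS _ _ (@nbhs_filter R^o 0) setT); last exact: filterT.
  by move=> t _ a; rewrite in_nil.
have := @filterI _ _ (@nbhs_filter R^o 0) _ _ (H a) IH.
move=> HI; apply: (@filterS _ _ (@nbhs_filter R^o 0) _ _ _ HI) => t [Ha Hs] b.
by rewrite in_cons => /orP[/eqP ->|bs]; [exact: Ha | exact: Hs].
Qed.

End NearHelpers.

Section ModId.
Context {R : realType} {V : lmodType R}.
Lemma convB2 t (x y k : V) :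
  t *: (x - k) + (1 - t) *: (y - k) = t *: x + (1 - t) *: y - k.
Proof. by rewrite !scalerBr addrACA -opprD -scalerDl [t + _]addrC subrK scale1r. Qed.
Lemma convB1 t (k1 b1 k2 b2 : V) :
  t *: (k1 - b1) + (1 - t) *: (k2 - b2) = (t *: k1 + (1 - t) *: k2) - (t *: b1 + (1 - t) *: b2).
Proof. by rewrite !scalerBr addrACA -opprD. Qed.
Lemma conv_sub3 t (k1 b1 k2 b2 k0 : V) :
  t *: (k1 - b1 - k0) + (1 - t) *: (k2 - b2 - k0) =
  (t *: k1 + (1 - t) *: k2) - (t *: b1 + (1 - t) *: b2) - k0.
Proof. by rewrite convB2 convB1. Qed.
Lemma convDl t (a u v : V) :
  a + (t *: u + (1 - t) *: v) = t *: (a + u) + (1 - t) *: (a + v).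
Proof. by rewrite !scalerDr addrACA -scalerDl [t + _]addrC subrK scale1r. Qed.
End ModId.

Lemma conv_lt {R : realType} (t x y e : R) : 0 <= t <= 1 -> `|x| < e -> `|y| < e ->
  `|t * x + (1 - t) * y| < e.
Proof.
move=> /andP[t0 t1] hx hy.
apply: le_lt_trans (ler_normD _ _) _.
have t1' : 0 <= 1 - t by rewrite subr_ge0.
rewrite !normrM (ger0_norm t0) (ger0_norm t1').
have [->|tp] := eqVneq t 0; first by rewrite mul0r add0r subr0 mul1r.
have tg : 0 < t by rewrite lt_neqAle eq_sym tp t0.
have h1 : t * `|x| < t * e by rewrite ltr_pM2l.
have h2 : (1 - t) * `|y| <= (1 - t) * e by rewrite ler_wpM2l ?subr_ge0 // ltW.
lra.
Qed.

Section Separation.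
Context {R : realType} {E : tvsType R}.
Local Notation D := (dual R E).
Local Notation Z := ((E * D) * R^o)%type.

Lemma convex_setE (A : set E) : convex_set A ->
  forall x y (t : R), A x -> A y -> 0 <= t <= 1 -> A (t *: x + (1 - t) *: y).
Proof.
move=> cA x y t Ax Ay /andP[t0 t1].
have := cA x y (Itv01 t0 t1) (mem_set Ax) (mem_set Ay).
by rewrite inE; apply.
Qed.

Lemma separation (h : E * D -> \bar R) (zx : E) (zu : D) (r0 : R) :
  tw_lsc h -> convex_fun h -> (r0%:E < h (zx, zu))%E ->
  (exists w0 (s0 : R), (h w0 <= s0%:E)%E) ->
  exists (d : E) (d' : D) (lam gam : R),
    (forall w (s : R), (h w <= s%:E)%E -> gam <= d' w.1 + w.2 d + lam * s) /\
    d' zx + zu d + lam * r0 < gam.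
Proof.
move=> hlsc hconv hz [w0 [s0 hw0]].
have [r1 r01 r1h] : exists2 r1 : R, r0 < r1 & (r1%:E < h (zx, zu))%E.
  move: hz; case: (h (zx, zu)) => [hr| |] //=.
  - rewrite lte_fin => hr0; exists ((r0 + hr) / 2); [|rewrite lte_fin]; lra.
  - by move=> _; exists (r0 + 1); [lra | rewrite ltry].
pose rho := (r1 - r0) / 2.
have rhodef : 2 * rho = r1 - r0 by rewrite /rho; field.
have rho0 : 0 < rho by lra.
have nz : ~ (h (zx, zu) <= r1%:E)%E.
  by move=> H; have := lt_le_trans r1h H; rewrite ltxx.
have [U [nU [s [eps [eps0 HU]]]]] := hlsc r1 (zx, zu) nz.
have [Bs Bconv [Bopen Bbasis]] := @locally_convex R E.
have [Ob [BO Oz] OU] := Bbasis zx U nU.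
have nO : nbhs zx Ob by apply: open_nbhs_nbhs; split => //; exact: Bopen.
have Oconv := convex_setE Ob (Bconv Ob (mem_set BO)).
pose W1 := [set u : E | Ob (zx + u)].
have nW1 : nbhs (0 : E) W1.
  have := nbhsB (- zx) nO; rewrite addNr.
  by apply: filterS => yv [q1 Qq1 <-]; rewrite /W1 /= addNKr.
pose W2 := [set u : E | Ob (zx - u)].
have nW2 : nbhs (0 : E) W2.
  have := nbhs0N nW1.
  by apply: filterS => yv [q1 Qq1 <-]; rewrite /W2 /= opprK.
pose U0 := W1 `&` W2.
have nU0 : nbhs (0 : E) U0 by exact: filterI.
have U0conv : forall u v (t : R), U0 u -> U0 v -> 0 <= t <= 1 ->
    U0 (t *: u + (1 - t) *: v).
  move=> u v t [Wu1 Wu2] [Wv1 Wv2] t01; split.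
    by rewrite /W1 /= convDl; exact: Oconv.
  by rewrite /W2 /= opprD -!scalerN convDl; exact: Oconv.
have U0sym : forall u, U0 u -> U0 (- u).
  by move=> u [Wu1 Wu2]; split; rewrite /W1 /W2 /= ?opprK.
have U00 : U0 0 by split; rewrite /W1 /W2 /= ?addr0 ?subr0.
pose B := [set y : Z | U0 y.1.1 /\ (forall a, a \in s -> `|y.1.2 a| < eps) /\
  `|y.2| < rho].
pose K := [set y : Z | (h y.1 <= y.2%:E)%E].
pose P0 : Z := ((zx, zu), r0).
have disj : forall b, B b -> ~ K (P0 + b).
  move=> [[u v] g] [[Wu1 Wu2] [Hv Hg]] Hk.
  apply: (HU (zx + u) (zu + v)).
  - exact: OU.
  - by move=> a as_; rewrite devD [zu a + _]addrC addrK; exact: Hv.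
  - apply: le_trans Hk _; rewrite lee_fin.
    change (r0 + g <= r1); have := ler_norm g; move: Hg => /= Hg; lra.
pose k0 : Z := (w0, s0).
have Kk0 : K k0 by [].
pose C := [set y : Z | exists k b, K k /\ B b /\ y = k - b - k0].
have B0 : B 0.
  split; first exact: U00.
  split; last by change (`|(0 : R)| < rho); rewrite normr0.
  by move=> a _; change (`|(0 : D) a| < eps); rewrite dev0 normr0.
have C0 : C 0 by exists k0, 0; split => //; split => //; rewrite subr0 subrr.
have Kconv : forall k1 k2 (t : R), K k1 -> K k2 -> 0 <= t <= 1 ->
    K (t *: k1 + (1 - t) *: k2).
  move=> [[x1 u1] s1] [[x2 u2] s2] t K1 K2 /andP[t0 t1].
  change ((h ((t *: x1 + (1 - t) *: x2)%R, (t *: u1 + (1 - t) *: u2)%R) <=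
    ((t * s1 + (1 - t) * s2)%R)%:E)%E).
  have [->|tn0] := eqVneq t 0.
    by rewrite !scale0r mul0r !add0r subr0 !scale1r mul1r.
  have [->|tn1] := eqVneq t 1.
    by rewrite subrr !scale0r mul0r !addr0 !scale1r mul1r.
  have tt : 0 < t < 1 by rewrite !lt_neqAle t0 t1 eq_sym tn0 tn1.
  apply: le_trans (hconv x1 x2 u1 u2 _ t tt _) _.
    by move=> a; rewrite devD !devZ.
  have ht : (0 <= t%:E)%E by rewrite lee_fin.
  have ht' : (0 <= (1 - t)%:E)%E by rewrite lee_fin subr_ge0.
  apply: le_trans (leeD (lee_wpmul2l ht K1) (lee_wpmul2l ht' K2)) _.
  exact: le_refl.
have Bconvex : forall b1 b2 (t : R), B b1 -> B b2 -> 0 <= t <= 1 ->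
    B (t *: b1 + (1 - t) *: b2).
  move=> [[u1 v1] g1] [[u2 v2] g2] t [U1 [V1 G1]] [U2 [V2 G2]] t01.
  split; [|split].
  - change (U0 (t *: u1 + (1 - t) *: u2)); exact: U0conv.
  - move=> a as_; change (`|(t *: v1 + (1 - t) *: v2) a| < eps).
    rewrite devD !devZ; exact: conv_lt (V1 a as_) (V2 a as_).
  - change (`|t * g1 + (1 - t) * g2| < rho); exact: conv_lt.
have Cconv : forall x y (t : R), C x -> C y -> 0 <= t <= 1 ->
    C (t *: x + (1 - t) *: y).
  move=> x y t [k1 [b1 [K1 [B1 ->]]]] [k2 [b2 [K2 [B2 ->]]]] t01.
  exists (t *: k1 + (1 - t) *: k2), (t *: b1 + (1 - t) *: b2).
  split; first exact: Kconv.
  split; first exact: Bconvex.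
  exact: conv_sub3.
have Bsym : forall b, B b -> B (- b).
  move=> [[u v] g] [U1 [V1 G1]]; split; [|split].
  - exact: U0sym.
  - by move=> a as_; change (`|(- v) a| < eps); rewrite devN normrN; exact: V1.
  - by change (`|- g| < rho); rewrite normrN.
have Babs : forall y : Z, exists2 t, 0 < t & B (t *: y).
  move=> [[u v] g].
  have h1 := near0_scale _ u U0 nU0.
  have h2 := near_all s (fun a t => `|t * v a| < eps) (fun a => near0_mul (v a) eps eps0).
  have h3 := near0_mul g rho rho0.
  have := @filterI _ _ (@nbhs_filter R^o 0) _ _ h1
    (@filterI _ _ (@nbhs_filter R^o 0) _ _ h2 h3).
  case/near0_pos => t t0 [H1 [H2 H3]]; exists t => //.
  split; [exact: H1|split; last exact: H3].
  by move=> a as_; change (`|(t *: v) a| < eps); rewrite devZ; exact: H2.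
have Cabs : forall y : Z, exists2 t, 0 < t & C (t *: y).
  move=> y; have [t t0 Bt] := Babs (- y); exists t => //.
  exists k0, (t *: - y); split => //; split => //.
  by rewrite scalerN opprK addrAC subrr add0r.
pose y0 := P0 - k0.
have y0nC : ~ C y0.
  move=> [k [b [Kk [Bb e]]]].
  have ek : k = P0 + b by move/addIr: e => ->; rewrite subrK.
  by apply: (disj b Bb); rewrite -ek.
have [g0 gsub ghom gle1 glt1] := @gauge_all R Z C C0 Cconv Cabs.
have y0ge : 1 <= gauge R Z C y0.
  by rewrite leNgt; apply/negP => /glt1.
have [F [Flin Fp Fy0]] := @hahn_banach R Z (gauge R Z C) g0 gsub ghom y0 y0ge.
have F0 : F 0 = 0.
  by have := Flin 1 0 0; rewrite scale1r addr0 mul1r => e; lra.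
have FZ c v : F (c *: v) = c * F v by rewrite -[c *: v]addr0 Flin F0 addr0.
have FD v w : F (v + w) = F v + F w by rewrite -[v]scale1r Flin mul1r scale1r.
have FN v : F (- v) = - F v by rewrite -scaleN1r FZ mulN1r.
have FB v w : F (v - w) = F v - F w by rewrite FD FN.
have FC : forall y, C y -> F y <= 1 by move=> y Cy; exact: le_trans (Fp y) (gle1 y Cy).
have Fbound : forall b, B b -> `|F b| <= 1.
  move=> b Bb.
  have Cb : C b.
    by exists k0, (- b); split => //; split; [exact: Bsym|rewrite opprK addrAC subrr add0r].
  have Cnb : C (- b) by exists k0, b; split => //; split => //; rewrite addrAC subrr add0r.
  have := FC _ Cb; have := FC _ Cnb; rewrite FN => h1 h2.
  by rewrite ler_norml; apply/andP; split; lra.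
have [tau tau0 Btau] := Babs (- y0).
have Kbound : forall k, K k -> F k <= F P0 - tau.
  move=> k Kk.
  have : C (k - tau *: - y0 - k0) by exists k, (tau *: - y0).
  move/FC; rewrite !FB FZ FN Fy0 => e2.
  have := Fy0; rewrite /y0 FB => e1; lra.
pose f1 (u : E) := - F ((u, 0), 0).
have f1lin : forall (c : R) (u v : E), f1 (c *: u + v) = c * f1 u + f1 v.
  move=> c u v; rewrite /f1.
  have -> : ((c *: u + v, 0), 0) = c *: ((u, 0), 0) + ((v, 0), 0) :> Z.
    change (((c *: u + v, 0), 0) = ((c *: u + v, c *: (0 : D) + 0), c * 0 + 0) :> Z).
    by rewrite scaler0 addr0 mulr0 addr0.
  rewrite Flin; ring.
have f1cont : continuous (f1 : E -> R^o).
  apply: (cont_of_bound f1 U0 f1lin nU0) => u U0u.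
  rewrite /f1 normrN; apply: Fbound; split => //; split.
    by move=> a _; change (`|(0 : D) a| < eps); rewrite dev0 normr0.
  by change (`|(0 : R)| < rho); rewrite normr0.
pose d' : D := Dual f1lin f1cont.
pose G (v : D) := - F ((0, v), 0).
have Glin : forall (c : R) (u v : D), G (c *: u + v) = c * G u + G v.
  move=> c u v; rewrite /G.
  have -> : ((0, c *: u + v), 0) = c *: ((0, u), 0) + ((0, v), 0) :> Z.
    change (((0, c *: u + v), 0) = ((c *: (0 : E) + 0, c *: u + v), c * 0 + 0) :> Z).
    by rewrite scaler0 addr0 mulr0 addr0.
  rewrite Flin; ring.
have Gbound : forall u : D, (forall a, a \in s -> `|u a| < eps) -> `|G u| <= 1.
  move=> u Hu; rewrite /G normrN; apply: Fbound; split; first exact: U00.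
  split; first exact: Hu.
  by change (`|(0 : R)| < rho); rewrite normr0.
have Gvan := vanish_of_bound s eps G eps0 Glin Gbound.
have [d Hd] := eval_rep s G Glin Gvan.
pose lam := - F ((0, 0), 1).
have dec : forall (x : E) (v : D) (s' : R), F ((x, v), s') = - f1 x - G v - s' * lam.
  move=> x v s'.
  have -> : ((x, v), s') = ((x, 0), 0) + (((0, v), 0) + s' *: ((0, 0), 1)) :> Z.
    change (((x, v), s') = ((x + (0 + s' *: (0 : E)), 0 + (v + s' *: (0 : D))),
      0 + (0 + s' * 1)) :> Z).
    by rewrite !scaler0 !addr0 !add0r mulr1.
  rewrite !FD FZ /f1 /G /lam; ring.
exists d, d', lam, (- F P0 + tau); split.
  move=> [x v] s' hw.
  have := Kbound ((x, v), s') hw; rewrite dec /= -Hd.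
  change (d' x) with (f1 x); lra.
have := dec zx zu r0; rewrite -Hd.
change (d' zx) with (f1 zx); rewrite /P0 => ->; lra.
Qed.

End Separation.

Lemma ni_core {R : realType} (t ce cq Lm kap lam : R) : 0 <= t -> t * lam <= 1 ->
  0 <= cq -> kap <= Lm + lam * cq -> t * t * ce + t * kap <= t * t * ce + t * Lm + cq.
Proof.
move=> t0 tl cq0 hk.
have h1 : 0 <= t * (Lm + lam * cq - kap) by rewrite mulr_ge0 // subr_ge0.
have h2 : 0 <= (1 - t * lam) * cq by rewrite mulr_ge0 // subr_ge0.
have e : t * t * ce + t * Lm + cq - (t * t * ce + t * kap) =
  t * (Lm + lam * cq - kap) + (1 - t * lam) * cq by ring.
rewrite -subr_ge0 e; exact: addr_ge0.
Qed.

Section Main.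
Context {R : realType} {E : tvsType R}.
Local Notation D := (dual R E).

Lemma fitz_ub {T : set (E * D)} (z : E * D) {p : E * D} : T p ->
  ((p.2 z.1 + z.2 p.1 - p.2 p.1)%:E <= fitz T z)%E.
Proof. by move=> Tp; apply: ereal_sup_ubound; exists p. Qed.

Lemma fitz_le (T : set (E * D)) (z : E * D) (r : R) :
  (forall p, T p -> p.2 z.1 + z.2 p.1 - p.2 p.1 <= r) -> (fitz T z <= r%:E)%E.
Proof. by move=> H; apply: ge_ereal_sup => _ [p Tp <-]; rewrite lee_fin; exact: H. Qed.

Lemma fitz_ninfty {T : set (E * D)} (z : E * D) : T !=set0 -> fitz T z != -oo%E.
Proof. by move=> [p Tp]; have := fitz_ub z Tp; case: (fitz T z). Qed.

Lemma mono_fitz {T : set (E * D)} {p : E * D} : monotone_op T -> T p -> fitz T p = (cpl p)%:E.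
Proof.
move=> mT Tp; apply/le_anti/andP; split.
  apply: fitz_le => q Tq; have := mT p q Tp Tq; rewrite !dualB /cpl; lra.
by have := fitz_ub p Tp; rewrite addrK.
Qed.

Definition hrep (T : set (E * D)) (z : E * D) : \bar R :=
  ereal_sup [set ((z.2 w.1 + w.2 z.1)%:E - fitz T w)%E | w in [set: E * D]].

Lemma hrep_ub (T : set (E * D)) (z w : E * D) : ((z.2 w.1 + w.2 z.1)%:E - fitz T w <= hrep T z)%E.
Proof. by apply: ereal_sup_ubound; exists w. Qed.

Lemma hrep_ge_fitz {T : set (E * D)} (z : E * D) : monotone_op T -> (fitz T z <= hrep T z)%E.
Proof.
move=> mT; apply: ge_ereal_sup => _ [p Tp <-].
have := hrep_ub T z p; rewrite (mono_fitz mT Tp) /cpl -EFinB.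
by rewrite [z.2 p.1 + _]addrC.
Qed.

Lemma hrep_ge_c {T : set (E * D)} (z : E * D) : monotone_op T -> T !=set0 ->
  ((cpl z)%:E <= hrep T z)%E.
Proof.
move=> mT Tne.
have h1 := hrep_ge_fitz z mT; have h2 := hrep_ub T z z.
have hn := fitz_ninfty z Tne.
case: (fitz T z) h1 h2 hn => [f| |] h1 h2 hn //.
  have [hf|hf] := leP f (cpl z).
    apply: le_trans _ h2; rewrite -EFinB lee_fin /cpl; rewrite /cpl in hf; lra.
  by apply: le_trans _ h1; rewrite lee_fin ltW.
by apply: le_trans _ h1; rewrite leey.
Qed.

Lemma hrep_le_c {T : set (E * D)} {p : E * D} : T p -> (hrep T p <= (cpl p)%:E)%E.
Proof.
move=> Tp; apply: ge_ereal_sup => _ [w _ <-].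
have := fitz_ub w Tp.
case: (fitz T w) => [f| |] hf //.
  by rewrite -EFinB lee_fin; rewrite lee_fin in hf; rewrite /cpl; lra.
by rewrite /= leNye.
Qed.

Lemma hrep_conv (T : set (E * D)) : T !=set0 -> convex_fun (hrep T).
Proof.
move=> Tne x1 x2 u1 u2 w t tt Hw; apply: ge_ereal_sup => _ [q _ <-].
have hq1 := hrep_ub T (x1, u1) q; have hq2 := hrep_ub T (x2, u2) q.
have hn := fitz_ninfty q Tne.
move: tt => /andP[t0 t1].
have ht : (0 <= t%:E)%E by rewrite lee_fin ltW.
have ht' : (0 <= (1 - t)%:E)%E by rewrite lee_fin subr_ge0 ltW.
case: (fitz T q) hq1 hq2 hn => [f| |] h1 h2 hn //; last by rewrite /= leNye.
apply: le_trans (leeD (lee_wpmul2l ht h1) (lee_wpmul2l ht' h2)).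
rewrite /= Hw dualD !dualZ -!EFinD lee_fin.
by rewrite le_eqVlt; apply/orP; left; apply/eqP; ring.
Qed.

Lemma hrep_lsc (T : set (E * D)) : T !=set0 -> tw_lsc (hrep T).
Proof.
move=> Tne r z hz.
have : (r%:E < hrep T z)%E by rewrite ltNge; apply/negP.
case/ereal_sup_gt => _ [w _ <-] hw.
have hn := fitz_ninfty w Tne.
case Ef: (fitz T w) hw hn => [f| |] hw hn //.
rewrite -EFinB lte_fin in hw.
pose dl := (z.2 w.1 + w.2 z.1 - f - r) / 2.
have dldef : 2 * dl = z.2 w.1 + w.2 z.1 - f - r by rewrite /dl; field.
have dl0 : 0 < dl by lra.
exists [set x | `|w.2 z.1 - w.2 x| < dl]; split.
  by have := @dfun_cont R E w.2 z.1; move/cvgrPdist_lt => /(_ dl dl0).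
exists [:: w.1], dl; split => // x u Ux Hu Hle.
have := Hu w.1 (mem_head _ _); have := hrep_ub T (x, u) w.
rewrite Ef -EFinB => h1 h2.
have := le_trans h1 Hle; rewrite lee_fin /= => h3.
move: Ux; rewrite /= ltr_norml => /andP[Ux1 Ux2].
move: h2; rewrite ltr_norml => /andP[h21 h22].
clear h1 Hle hz Ef hn Hu; lra.
Qed.

Lemma hrep_proper (T : set (E * D)) : monotone_op T -> T !=set0 -> proper_fun (hrep T).
Proof.
move=> mT Tne; split.
  by move=> z; have := hrep_ge_c z mT Tne; case: (hrep T z).
have [p Tp] := Tne; exists p.
by have := hrep_le_c Tp; case: (hrep T p).
Qed.

End Main.

Theorem theorem3p1 (R : realType) (E : tvsType R)
    (hE : hausdorff_space E) (ntE : exists x : E, x != 0)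
    (T : set (E * dual R E)) (V : set E) (hVT : V `&` dom T !=set0) :
  let c1 := in_M (restr T V) /\ V_identifies V T in
  let c2 := V_representable T V /\ V_locates V T in
  let c3 := V_representable T V /\ V_NI T V in
  [/\ c1 -> c2, c2 -> c3 & alg_open V -> (c3 -> c1)].
Proof.
move=> c1 c2 c3; rewrite /c1 /c2 /c3 {c1 c2 c3}.
set S := restr T V.
split.
- move=> [[mS Sne] idT]; split.
    split; first exact: hVT.
    exists (hrep S); split.
      split.
      + exact: hrep_proper.
      + exact: hrep_conv.
      + exact: hrep_lsc.
      + by move=> z; exact: hrep_ge_c.
    move=> z; split.
      move=> [hz Vz]; split => //; apply: idT => //.
      by rewrite -hz; exact: hrep_ge_fitz.
    move=> Sz; split; last exact: Sz.2.
    by apply/le_anti/andP; split; [exact: hrep_le_c | exact: hrep_ge_c].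
  by move=> x [u hu] Vx; exists u; exact: idT (x, u) hu Vx.
- move=> [rep loc]; split => //.
  move=> [x xs] /= Vx; rewrite leNgt; apply/negP => hlt.
  have [|u Tu] := loc x _ Vx.
    by exists xs; exact: ltW.
  have := fitz_ub (x, xs) (conj Tu Vx : S (x, u)).
  rewrite /= [u x + _]addrC addrK => h.
  by have := lt_le_trans hlt h; rewrite ltxx.
move=> aoV [[_ [h [[hprop hconv hlsc hge] hrep]]] ni].
have Sne : S !=set0.
  by have [x [Vx [u Tu]]] := hVT; exists (x, u).
have hS : forall p, S p -> h p = (cpl p)%:E by move=> p Sp; exact: ((hrep p).2 Sp).1.
split.
  split => //.
  move=> [p1 p2] [q1 q2] Sp Sq /=.
  have tt : ((0 : R) < 2^-1) && (2^-1 < 1 :> R).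
    by rewrite invr_gt0 ltr0n /= invf_lt1 ?ltr0n // ltr1n.
  have := hconv p1 q1 p2 q2 (2^-1 *: p2 + (1 - 2^-1) *: q2) (2^-1) tt.
  move=> /(_ (fun a => ltac:(by rewrite devD !devZ))).
  rewrite (hS _ Sp) (hS _ Sq) => H.
  have := le_trans (hge _) H; rewrite /cpl /= -!EFinD lee_fin.
  rewrite !dualD !dualZ !dualN => H2.
  lra.
move=> [x xs] hphi Vx; apply: contrapT => nT.
have hne : h (x, xs) != (cpl (x, xs))%:E.
  by apply/eqP => e; apply: nT; have [] := (hrep (x, xs)).1 (conj e Vx).
have hlt : ((cpl (x, xs))%:E < h (x, xs))%E by rewrite lt_neqAle eq_sym hne hge.
have hex : exists w0 (s0 : R), (h w0 <= s0%:E)%E.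
  by have [p Sp] := Sne; exists p, (cpl p); rewrite hS.
have [d [d' [lam [gam [Hsep Hz]]]]] := separation h x xs (cpl (x, xs)) hlsc hconv hlt hex.
pose kap := gam - (d' x + xs d + lam * xs x).
have kap0 : 0 < kap by rewrite /kap subr_gt0.
pose e1 : E := - (d + lam *: x).
pose e2 : dual R E := - (d' + lam *: xs).
pose ce := e2 e1.
have [dl dl0 Hdl] := aoV x Vx e1.
have h1 : \forall t \near (0 : R^o), `|t * lam| < 1 := near0_mul lam 1 ltr01.
have h2 : \forall t \near (0 : R^o), `|t * `|ce| | < kap := near0_mul `|ce| kap kap0.
have h3 : \forall t \near (0 : R^o), `|t * 1| < dl := near0_mul 1 dl dl0.
have := @filterI _ _ (@nbhs_filter R^o 0) _ _ h1
  (@filterI _ _ (@nbhs_filter R^o 0) _ _ h2 h3).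
case/near0_pos => t t0 [ht1 [ht2 ht3]].
move: ht1 ht2 ht3; rewrite mulr1 !ltr_norml => /andP[_ ht1] /andP[_ ht2] /andP[_ ht3].
have Vt : V (x + t *: e1) by apply: Hdl; rewrite (ltW t0) ltW.
pose zt : E * dual R E := (x + t *: e1, xs + t *: e2).
have hni := ni zt Vt.
have hup : (fitz S zt <= (cpl zt - (t * t * ce + t * kap))%:E)%E.
  apply: fitz_le => [[a as_]] Sq.
  change (as_ (x + t *: e1) + (xs + t *: e2) a - as_ a <=
    (xs + t *: e2) (x + t *: e1) - (t * t * ce + t * kap)).
  have hsq := Hsep (a, as_) (cpl (a, as_)) (ltac:(by rewrite (hS _ Sq))).
  have hpq : as_ x + xs a - as_ a <= xs x.
    have := le_trans (fitz_ub (x, xs) Sq) hphi.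
    by rewrite lee_fin.
  pose cq := xs x - xs a - as_ x + as_ a.
  have cq0 : 0 <= cq by rewrite /cq; lra.
  pose Lm := xs e1 - as_ e1 + e2 x - e2 a.
  have eL : Lm + lam * cq = as_ d - xs d + d' a - d' x - lam * xs x + lam * as_ a.
    rewrite /Lm /cq /e1 /e2 !dualN !dualD !dualZ !devN !devD !devZ; ring.
  have hk : kap <= Lm + lam * cq by rewrite eL /kap /=; rewrite /cpl /= in hsq; lra.
  have := ni_core t ce cq Lm kap lam (ltW t0) (ltW ht1) cq0 hk.
  have eid : (xs + t *: e2) (x + t *: e1) - (as_ (x + t *: e1) + (xs + t *: e2) a - as_ a) =
      t * t * ce + t * Lm + cq.
    rewrite /ce /Lm /cq !devD !devZ !dualD !dualZ; ring.
  move=> h4; lra.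
have := le_trans hni hup; rewrite lee_fin => h5.
have : 0 < t * (t * ce + kap).
  apply: mulr_gt0 => //.
  have hc : - `|ce| <= ce := lerNnormlW (lexx _).
  have := ler_wpM2l (ltW t0) hc; rewrite mulrN => hc'.
  lra.
lra.
Qed.
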